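(* Let $\mathcal{C}$ be a peircean bicategory. Then the functor $\mathcal{C}[-,I]:\mathsf{Map}(\mathcal{C})^{op}\to\mathsf{InfSl}$, sending an object $X$ to $\mathcal{C}[X,I]$ and a map $f:X\to Y$ to $c\mapsto f;c$, is a boolean hyperdoctrine.
   Context: Composition in diagrammatic order. A cartesian bicategory is a poset-enriched symmetric monoidal category $(\mathcal{C},\otimes,I)$ with, for each $X$, a commutative comonoid $(\mathrm{copy}_X:X\to X\otimes X,\mathrm{disc}_X:X\to I)$ and commutative monoid $(\mathrm{cocopy}_X,\mathrm{codisc}_X)$, such that every arrow $c:X\to Y$ satisfies $c;\mathrm{copy}_Y\le\mathrm{copy}_X;(c\otimes c)$, $c;\mathrm{disc}_Y\le\mathrm{disc}_X$; $\mathrm{id}_X\le\mathrm{copy}_X;\mathrm{cocopy}_X$, $\mathrm{cocopy}_X;\mathrm{copy}_X\le\mathrm{id}$, $\mathrm{id}_X\le\mathrm{disc}_X;\mathrm{codisc}_X$, $\mathrm{codisc}_X;\mathrm{disc}_X\le\mathrm{id}_I$; the monoid and comonoid form special Frobenius bimonoids; and the standard coherence conditions hold. A map is an arrow $f:X\to Y$ with $\mathrm{copy}_X;(f\otimes f)\le f;\mathrm{copy}_Y$ and $\mathrm{disc}_X\le f;\mathrm{disc}_Y$; maps form a category $\mathsf{Map}(\mathcal{C})$ with finite products. A peircean bicategory is a cartesian bicategory whose homsets carry Boolean algebra structures (with the given order) such that $f;\neg c=\neg(f;c)$ for every map $f:X\to Y$ and arrow $c:Y\to Z$. $\mathsf{InfSl}$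 is the category of inf-semilattices. An elementary and existential doctrine is a functor $P:\mathcal{C}^{op}\to\mathsf{InfSl}$, $\mathcal{C}$ with finite products, such that: for each $Y$ there is $\delta_Y\in P(Y\times Y)$ with, for every $X$, the assignment $\alpha\mapsto P_{\langle\pi_1,\pi_2\rangle}(\alpha)\wedge P_{\langle\pi_2,\pi_3\rangle}(\delta_Y)$ left adjoint to $P_{\mathrm{id}_X\times\Delta_Y}:P(X\times Y\times Y)\to P(X\times Y)$; and for each projection $\pi_X:X\times Y\to X$, $P_{\pi_X}$ has a left adjoint $\exists_{\pi_X}$ satisfying the Beck–Chevalley condition and Frobenius reciprocity. A boolean hyperdoctrine is an elementary and existential doctrine such that each $P(X)$ is a Boolean algebra and each $P_f$ is a homomorphism of Boolean algebras. *)

(* Defs.v *)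
(* Composition is written in DIAGRAMMATIC order:  f >> g  means  "f ; g". *)

Set Implicit Arguments.
Unset Strict Implicit.

Record BoolOps (T : Type) : Type := {
  btop : T; bbot : T;
  bmeet : T -> T -> T; bjoin : T -> T -> T;
  bneg : T -> T }.

Definition is_boolean (T : Type) (le : T -> T -> Prop) (B : BoolOps T) : Prop :=
  (forall x, le x x) /\
  (forall x y z, le x y -> le y z -> le x z) /\
  (forall x y, le x y -> le y x -> x = y) /\
  (forall x, le x (btop B)) /\
  (forall x, le (bbot B) x) /\
  (forall x y z, le z (bmeet B x y) <-> (le z x /\ le z y)) /\
  (forall x y z, le (bjoin B x y) z <-> (le x z /\ le y z)) /\
  (forall x y z, bmeet B x (bjoin B y z) = bjoin B (bmeet B x y) (bmeet B x z)) /\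
  (forall x, bmeet B x (bneg B x) = bbot B) /\
  (forall x, bjoin B x (bneg B x) = btop B).

Record SMPData : Type := {
  ob : Type;
  hom : ob -> ob -> Type;
  hle : forall X Y, hom X Y -> hom X Y -> Prop;
  idm : forall X, hom X X;
  cmp : forall X Y Z, hom X Y -> hom Y Z -> hom X Z;
  tens : ob -> ob -> ob;
  unit : ob;
  tensm : forall X X' Y Y', hom X X' -> hom Y Y' -> hom (tens X Y) (tens X' Y');
  assoc : forall X Y Z, hom (tens (tens X Y) Z) (tens X (tens Y Z));
  assoc_inv : forall X Y Z, hom (tens X (tens Y Z)) (tens (tens X Y) Z);
  lunit : forall X, hom (tens unit X) X;
  lunit_inv : forall X, hom X (tens unit X);
  runit : forall X, hom (tens X unit) X;
  runit_inv : forall X, hom X (tens X unit);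
  sym : forall X Y, hom (tens X Y) (tens Y X) }.

Arguments hom {_} _ _.
Arguments hle {_ _ _} _ _.
Arguments idm {_} _.
Arguments cmp {_ _ _ _} _ _.
Arguments tens {_} _ _.
Arguments unit {_}.
Arguments tensm {_ _ _ _ _} _ _.
Arguments assoc {_} _ _ _.
Arguments assoc_inv {_} _ _ _.
Arguments lunit {_} _.
Arguments lunit_inv {_} _.
Arguments runit {_} _.
Arguments runit_inv {_} _.
Arguments sym {_} _ _.

Declare Scope pcat_scope.
Infix ">>" := cmp (at level 55, left associativity) : pcat_scope.
Infix "**" := tensm (at level 40, left associativity) : pcat_scope.
Open Scope pcat_scope.

Section SMPLaws.
Variable C : SMPData.
Implicit Types (X Y Z W : ob C).

Record is_SMPCat : Prop := {
  le_refl : forall X Y (f : hom X Y), hle f f;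
  le_trans : forall X Y (f g h : hom X Y), hle f g -> hle g h -> hle f h;
  le_antisym : forall X Y (f g : hom X Y), hle f g -> hle g f -> f = g;
  cmp_mono : forall X Y Z (f f' : hom X Y) (g g' : hom Y Z),
      hle f f' -> hle g g' -> hle (f >> g) (f' >> g');
  id_l : forall X Y (f : hom X Y), idm X >> f = f;
  id_r : forall X Y (f : hom X Y), f >> idm Y = f;
  cmp_assoc : forall X Y Z W (f : hom X Y) (g : hom Y Z) (h : hom Z W),
      (f >> g) >> h = f >> (g >> h);
  tens_mono : forall X X' Y Y' (f f' : hom X X') (g g' : hom Y Y'),
      hle f f' -> hle g g' -> hle (f ** g) (f' ** g');
  tens_id : forall X Y, idm X ** idm Y = idm (tens X Y);
  tens_cmp : forall X X' X'' Y Y' Y'' (f : hom X X') (f' : hom X' X'')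
      (g : hom Y Y') (g' : hom Y' Y''),
      (f >> f') ** (g >> g') = (f ** g) >> (f' ** g');
  assoc_iso1 : forall X Y Z, assoc X Y Z >> assoc_inv X Y Z = idm _;
  assoc_iso2 : forall X Y Z, assoc_inv X Y Z >> assoc X Y Z = idm _;
  lunit_iso1 : forall X, lunit X >> lunit_inv X = idm _;
  lunit_iso2 : forall X, lunit_inv X >> lunit X = idm _;
  runit_iso1 : forall X, runit X >> runit_inv X = idm _;
  runit_iso2 : forall X, runit_inv X >> runit X = idm _;
  sym_inv : forall X Y, sym X Y >> sym Y X = idm _;
  assoc_nat : forall X X' Y Y' Z Z' (f : hom X X') (g : hom Y Y') (h : hom Z Z'),
      ((f ** g) ** h) >> assoc X' Y' Z' = assoc X Y Z >> (f ** (g ** h));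
  lunit_nat : forall X X' (f : hom X X'),
      (idm unit ** f) >> lunit X' = lunit X >> f;
  runit_nat : forall X X' (f : hom X X'),
      (f ** idm unit) >> runit X' = runit X >> f;
  sym_nat : forall X X' Y Y' (f : hom X X') (g : hom Y Y'),
      (f ** g) >> sym X' Y' = sym X Y >> (g ** f);
  pentagon : forall W X Y Z,
      (assoc W X Y ** idm Z) >> assoc W (tens X Y) Z >> (idm W ** assoc X Y Z)
      = assoc (tens W X) Y Z >> assoc W X (tens Y Z);
  triangle : forall X Y,
      assoc X unit Y >> (idm X ** lunit Y) = runit X ** idm Y;
  hexagon : forall X Y Z,
      assoc X Y Z >> sym X (tens Y Z) >> assoc Y Z X
      = (sym X Y ** idm Z) >> assoc Y X Z >> (idm Y ** sym X Z) }.

End SMPLaws.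

Definition mid (C : SMPData) (X Y Z W : ob C) :
    hom (tens (tens X Y) (tens Z W)) (tens (tens X Z) (tens Y W)) :=
  assoc X Y (tens Z W)
  >> (idm X ** assoc_inv Y Z W)
  >> (idm X ** (sym Y Z ** idm W))
  >> (idm X ** assoc Z Y W)
  >> assoc_inv X Z (tens Y W).

Record CBData : Type := {
  cbC :> SMPData;
  copy : forall X : ob cbC, hom X (tens X X);
  disc : forall X : ob cbC, hom X unit;
  cocopy : forall X : ob cbC, hom (tens X X) X;
  codisc : forall X : ob cbC, hom unit X }.

Arguments copy {_} _.
Arguments disc {_} _.
Arguments cocopy {_} _.
Arguments codisc {_} _.

Record is_CartBicat (C : CBData) : Prop := {
  copy_assoc : forall X : ob C,
      copy X >> (copy X ** idm X) >> assoc X X X = copy X >> (idm X ** copy X);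
  copy_unit_l : forall X : ob C, copy X >> (disc X ** idm X) >> lunit X = idm X;
  copy_unit_r : forall X : ob C, copy X >> (idm X ** disc X) >> runit X = idm X;
  copy_comm : forall X : ob C, copy X >> sym X X = copy X;
  cocopy_assoc : forall X : ob C,
      assoc X X X >> (idm X ** cocopy X) >> cocopy X = (cocopy X ** idm X) >> cocopy X;
  cocopy_unit_l : forall X : ob C,
      lunit_inv X >> (codisc X ** idm X) >> cocopy X = idm X;
  cocopy_unit_r : forall X : ob C,
      runit_inv X >> (idm X ** codisc X) >> cocopy X = idm X;
  cocopy_comm : forall X : ob C, sym X X >> cocopy X = cocopy X;
  frobenius_l : forall X : ob C,
      (copy X ** idm X) >> assoc X X X >> (idm X ** cocopy X) = cocopy X >> copy X;
  frobenius_r : forall X : ob C,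
      (idm X ** copy X) >> assoc_inv X X X >> (cocopy X ** idm X) = cocopy X >> copy X;
  special : forall X : ob C, copy X >> cocopy X = idm X;
  copy_tens : forall X Y : ob C, copy (tens X Y) = (copy X ** copy Y) >> mid X X Y Y;
  disc_tens : forall X Y : ob C, disc (tens X Y) = (disc X ** disc Y) >> lunit unit;
  copy_unit : copy (@unit C) = lunit_inv unit;
  disc_unitob : disc (@unit C) = idm unit;
  cocopy_tens : forall X Y : ob C,
      cocopy (tens X Y) = mid X Y X Y >> (cocopy X ** cocopy Y);
  codisc_tens : forall X Y : ob C,
      codisc (tens X Y) = lunit_inv unit >> (codisc X ** codisc Y);
  cocopy_unit : cocopy (@unit C) = lunit unit;
  codisc_unitob : codisc (@unit C) = idm unit;
  copy_lax : forall (X Y : ob C) (c : hom X Y), hle (c >> copy Y) (copy X >> (c ** c));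
  disc_lax : forall (X Y : ob C) (c : hom X Y), hle (c >> disc Y) (disc X);
  copy_adj1 : forall X : ob C, hle (idm X) (copy X >> cocopy X);
  copy_adj2 : forall X : ob C, hle (cocopy X >> copy X) (idm (tens X X));
  disc_adj1 : forall X : ob C, hle (idm X) (disc X >> codisc X);
  disc_adj2 : forall X : ob C, hle (codisc X >> disc X) (idm unit) }.

Definition is_map (C : CBData) (X Y : ob C) (f : hom X Y) : Prop :=
  hle (copy X >> (f ** f)) (f >> copy Y) /\ hle (disc X) (f >> disc Y).

Record PBData : Type := {
  pbC :> CBData;
  bops : forall X Y : ob pbC, BoolOps (hom X Y) }.

Arguments bops {_} _ _.

Definition is_peircean (C : PBData) : Prop :=
  (forall X Y : ob C, is_boolean (@hle C X Y) (bops X Y)) /\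
  (forall (X Y Z : ob C) (f : hom X Y) (c : hom Y Z),
      is_map f -> f >> bneg (bops Y Z) c = bneg (bops X Z) (f >> c)).

Record PeirceanBicat : Type := {
  pb_data :> PBData;
  pb_smc : is_SMPCat pb_data;
  pb_cb : is_CartBicat pb_data;
  pb_peirce : is_peircean pb_data }.

(** * Categories with (chosen) finite products, presented as a class of
      arrows [farr] inside ambient hom-types (so that Map(C) can be given
      as the arrows of C satisfying [is_map]). *)

Record FPData : Type := {
  fob : Type;
  fhom : fob -> fob -> Type;
  farr : forall X Y, fhom X Y -> Prop;
  fid : forall X, fhom X X;
  fcmp : forall X Y Z, fhom X Y -> fhom Y Z -> fhom X Z;
  fprod : fob -> fob -> fob;
  ffst : forall X Y, fhom (fprod X Y) X;
  fsnd : forall X Y, fhom (fprod X Y) Y;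
  fpair : forall Z X Y, fhom Z X -> fhom Z Y -> fhom Z (fprod X Y);
  fterm : fob;
  fbang : forall X, fhom X fterm }.

Arguments fhom {_} _ _.
Arguments farr {_ _ _} _.
Arguments fid {_} _.
Arguments fcmp {_ _ _ _} _ _.
Arguments fprod {_} _ _.
Arguments ffst {_} _ _.
Arguments fsnd {_} _ _.
Arguments fpair {_ _ _ _} _ _.
Arguments fterm {_}.
Arguments fbang {_} _.

Definition is_fp_cat (D : FPData) : Prop :=
  (forall X : fob D, farr (fid X)) /\
  (forall (X Y Z : fob D) (f : fhom X Y) (g : fhom Y Z), farr f -> farr g -> farr (fcmp f g)) /\
  (forall (X Y : fob D) (f : fhom X Y), farr f -> fcmp (fid X) f = f /\ fcmp f (fid Y) = f) /\
  (forall (X Y Z W : fob D) (f : fhom X Y) (g : fhom Y Z) (h : fhom Z W),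
      farr f -> farr g -> farr h -> fcmp (fcmp f g) h = fcmp f (fcmp g h)) /\
  (forall X Y : fob D, farr (ffst X Y) /\ farr (fsnd X Y)) /\
  (forall (Z X Y : fob D) (f : fhom Z X) (g : fhom Z Y), farr f -> farr g ->
      farr (fpair f g) /\ fcmp (fpair f g) (ffst X Y) = f
      /\ fcmp (fpair f g) (fsnd X Y) = g) /\
  (forall (Z X Y : fob D) (h : fhom Z (fprod X Y)), farr h ->
      h = fpair (fcmp h (ffst X Y)) (fcmp h (fsnd X Y))) /\
  (forall X : fob D, farr (fbang X)) /\
  (forall (X : fob D) (h : fhom X fterm), farr h -> h = fbang X).

(** * Doctrines  P : D^op -> InfSl  (fibres carry Boolean operations; only
      top and meet are used for the InfSl / elementary / existential parts). *)

Record DocData (D : FPData) : Type := {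
  pob : fob D -> Type;
  ple : forall X, pob X -> pob X -> Prop;
  pops : forall X, BoolOps (pob X);
  pact : forall X Y, fhom X Y -> pob Y -> pob X }.

Arguments ple {_ _ _} _ _.
Arguments pact {_ _ _ _} _ _.

Section Doctrine.
Variables (D : FPData) (P : DocData D).
Local Unset Implicit Arguments.

Let top X := btop (pops P X).
Let meet X := bmeet (pops P X).

Definition is_infsl_functor : Prop :=
  (forall X, (forall a : pob P X, ple a a) /\
             (forall a b c : pob P X, ple a b -> ple b c -> ple a c) /\
             (forall a b : pob P X, ple a b -> ple b a -> a = b) /\
             (forall a : pob P X, ple a (top X)) /\
             (forall a b c : pob P X, ple c (meet X a b) <-> (ple c a /\ ple c b))) /\
  (forall X Y (f : fhom X Y), farr f ->
      pact f (top Y) = top X /\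
      (forall a b, pact f (meet Y a b) = meet X (pact f a) (pact f b))) /\
  (forall X (a : pob P X), pact (fid X) a = a) /\
  (forall X Y Z (f : fhom X Y) (g : fhom Y Z) (a : pob P Z), farr f -> farr g ->
      pact (fcmp f g) a = pact f (pact g a)).

(* elementary: X x Y x Y is taken as (X x Y) x Y *)
Definition is_elementary : Prop :=
  forall Y, exists delta : pob P (fprod Y Y),
    forall X (a : pob P (fprod X Y)) (b : pob P (fprod (fprod X Y) Y)),
      ple (meet _ (pact (ffst (fprod X Y) Y) a)
                  (pact (fpair (fcmp (ffst (fprod X Y) Y) (fsnd X Y))
                               (fsnd (fprod X Y) Y)) delta)) b
      <-> ple a (pact (fpair (fid (fprod X Y)) (fsnd X Y)) b).

Definition is_existential : Prop :=
  exists E : forall X Y, pob P (fprod X Y) -> pob P X,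
    forall X Y,
      (forall (a : pob P (fprod X Y)) (b : pob P X),
          ple (E X Y a) b <-> ple a (pact (ffst X Y) b)) /\
      (forall (a : pob P (fprod X Y)) (b : pob P X),
          E X Y (meet _ a (pact (ffst X Y) b)) = meet _ (E X Y a) b) /\
      (forall X' (f : fhom X' X) (a : pob P (fprod X Y)), farr f ->
          pact f (E X Y a) = E X' Y (pact (fpair (fcmp (ffst X' Y) f) (fsnd X' Y)) a)).

Definition is_boolean_doctrine : Prop :=
  (forall X, is_boolean (@ple D P X) (pops P X)) /\
  (forall X Y (f : fhom X Y), farr f ->
      pact f (btop (pops P Y)) = btop (pops P X) /\
      pact f (bbot (pops P Y)) = bbot (pops P X) /\
      (forall a b, pact f (bmeet (pops P Y) a b) = bmeet (pops P X) (pact f a) (pact f b)) /\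
      (forall a b, pact f (bjoin (pops P Y) a b) = bjoin (pops P X) (pact f a) (pact f b)) /\
      (forall a, pact f (bneg (pops P Y) a) = bneg (pops P X) (pact f a))).

Definition is_boolean_hyperdoctrine : Prop :=
  is_fp_cat D /\ is_infsl_functor /\ is_elementary /\ is_existential
  /\ is_boolean_doctrine.

End Doctrine.

Arguments is_infsl_functor {D} P.
Arguments is_elementary {D} P.
Arguments is_existential {D} P.
Arguments is_boolean_doctrine {D} P.
Arguments is_boolean_hyperdoctrine {D} P.

Definition MapFP (C : PBData) : FPData := {|
  fob := ob C;
  fhom := @hom C;
  farr := fun X Y f => @is_map C X Y f;
  fid := @idm C;
  fcmp := fun X Y Z f g => f >> g;
  fprod := @tens C;
  ffst := fun X Y => (idm X ** disc Y) >> runit X;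
  fsnd := fun X Y => (disc X ** idm Y) >> lunit Y;
  fpair := fun Z X Y f g => copy Z >> (f ** g);
  fterm := @unit C;
  fbang := @disc C |}.

Definition HomIDoc (C : PBData) : DocData (MapFP C) :=
  @Build_DocData (MapFP C)
    (fun X : ob C => @hom C X (@unit C))
    (fun X : ob C => @hle C X (@unit C))
    (fun X : ob C => @bops C X (@unit C))
    (fun (X Y : ob C) (f : @hom C X Y) (c : @hom C Y (@unit C)) => f >> c).

(* Main.v *)
Require Import Defs.
Set Implicit Arguments.

Section BoolLemmas.
Variables (T : Type) (le : T -> T -> Prop) (B : BoolOps T).
Hypothesis H : is_boolean le B.
Notation "x <= y" := (le x y).
Notation top := (btop B). Notation bot := (bbot B).
Notation meet := (bmeet B). Notation join := (bjoin B). Notation neg := (bneg B).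

Lemma b_refl x : x <= x. Proof. apply H. Qed.
Lemma b_trans x y z : x <= y -> y <= z -> x <= z. Proof. apply H. Qed.
Lemma b_anti x y : x <= y -> y <= x -> x = y. Proof. apply H. Qed.
Lemma b_top x : x <= top. Proof. apply H. Qed.
Lemma b_bot x : bot <= x. Proof. apply H. Qed.
Lemma b_meet x y z : z <= meet x y <-> (z <= x /\ z <= y). Proof. apply H. Qed.
Lemma b_join x y z : join x y <= z <-> (x <= z /\ y <= z). Proof. apply H. Qed.
Lemma b_distr x y z : meet x (join y z) = join (meet x y) (meet x z). Proof. apply H. Qed.
Lemma b_compl1 x : meet x (neg x) = bot. Proof. apply H. Qed.
Lemma b_compl2 x : join x (neg x) = top. Proof. apply H. Qed.

Lemma b_meet_l x y : meet x y <= x. Proof. apply (b_meet x y (meet x y)), b_refl. Qed.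
Lemma b_meet_r x y : meet x y <= y. Proof. apply (b_meet x y (meet x y)), b_refl. Qed.
Lemma b_meet_glb x y z : z <= x -> z <= y -> z <= meet x y. Proof. intros; apply b_meet; auto. Qed.
Lemma b_join_l x y : x <= join x y. Proof. apply (b_join x y (join x y)), b_refl. Qed.
Lemma b_join_r x y : y <= join x y. Proof. apply (b_join x y (join x y)), b_refl. Qed.
Lemma b_join_lub x y z : x <= z -> y <= z -> join x y <= z. Proof. intros; apply b_join; auto. Qed.

Lemma b_meetC x y : meet x y = meet y x.
Proof. apply b_anti; apply b_meet_glb; (apply b_meet_r || apply b_meet_l). Qed.
Lemma b_joinC x y : join x y = join y x.
Proof. apply b_anti; apply b_join_lub; (apply b_join_r || apply b_join_l). Qed.
Lemma b_meet_mono x y x' y' : x <= x' -> y <= y' -> meet x y <= meet x' y'.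
Proof. intros. apply b_meet_glb. eapply b_trans; [apply b_meet_l|auto]. eapply b_trans; [apply b_meet_r|auto]. Qed.
Lemma b_join_mono x y x' y' : x <= x' -> y <= y' -> join x y <= join x' y'.
Proof. intros. apply b_join_lub. eapply b_trans; [eauto|apply b_join_l]. eapply b_trans; [eauto|apply b_join_r]. Qed.
Lemma b_meet_top x : meet x top = x.
Proof. apply b_anti. apply b_meet_l. apply b_meet_glb; auto using b_refl, b_top. Qed.
Lemma b_join_bot x : join x bot = x.
Proof. apply b_anti. apply b_join_lub; auto using b_refl, b_bot. apply b_join_l. Qed.
Lemma b_le_meet x y : x <= y -> meet x y = x.
Proof. intros; apply b_anti. apply b_meet_l. apply b_meet_glb; auto using b_refl. Qed.

Lemma b_compl_uniq x y : meet x y = bot -> join x y = top -> y = neg x.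
Proof.
  intros H1 H2. apply b_anti.
  - rewrite <- (b_meet_top y), <- (b_compl2 x), b_distr, b_meetC, H1.
    apply b_join_lub. apply b_bot. apply b_meet_r.
  - rewrite <- (b_meet_top (neg x)), <- H2, b_distr, b_meetC, b_compl1.
    apply b_join_lub. apply b_bot. apply b_meet_r.
Qed.
Lemma b_negneg x : neg (neg x) = x.
Proof. symmetry. apply b_compl_uniq. rewrite b_meetC; apply b_compl1. rewrite b_joinC; apply b_compl2. Qed.
Lemma b_neg_join x y : neg (join x y) = meet (neg x) (neg y).
Proof.
  symmetry. apply b_compl_uniq.
  - rewrite b_meetC, b_distr. apply b_anti; [|apply b_bot].
    apply b_join_lub.
    + rewrite <- (b_compl1 x). apply b_meet_glb. apply b_meet_r. eapply b_trans. apply b_meet_l. apply b_meet_l.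
    + rewrite <- (b_compl1 y). apply b_meet_glb. apply b_meet_r. eapply b_trans. apply b_meet_l. apply b_meet_r.
  - apply b_anti. apply b_top.
    rewrite <- (b_compl2 x). apply b_join_lub.
    + eapply b_trans. apply (b_join_l x y). apply b_join_l.
    + assert (E : neg x = join (meet (neg x) y) (meet (neg x) (neg y))).
      { rewrite <- b_distr, b_compl2, b_meet_top. reflexivity. }
      apply b_trans with (y := join (meet (neg x) y) (meet (neg x) (neg y))).
      { rewrite <- E. apply b_refl. }
      apply b_join_lub.
      * eapply b_trans. apply b_meet_r. eapply b_trans. apply (b_join_r x y). apply b_join_l.
      * apply b_join_r.
Qed.
Lemma b_join_demorgan x y : join x y = neg (meet (neg x) (neg y)).
Proof. rewrite <- b_neg_join, b_negneg. reflexivity. Qed.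
Lemma b_neg_top : neg top = bot.
Proof. rewrite <- (b_compl1 top), b_meetC, b_meet_top. reflexivity. Qed.
Lemma b_split x y : x = join (meet x y) (meet x (neg y)).
Proof. rewrite <- b_distr, b_compl2, b_meet_top. reflexivity. Qed.
Lemma b_eq_le x y : (forall z, x <= z <-> y <= z) -> x = y.
Proof. intros Hz. apply b_anti; apply Hz; apply b_refl. Qed.
End BoolLemmas.

Section PB.
Context {C : PeirceanBicat}.
Let SM : is_SMPCat C := pb_smc C.
Let CB : is_CartBicat C := pb_cb C.
Implicit Types X Y Z W V : ob C.

Lemma lrefl {X Y} (f : hom X Y) : hle f f. Proof. apply (le_refl SM). Qed.
Lemma ltrans {X Y} (f g h : hom X Y) : hle f g -> hle g h -> hle f h. Proof. apply (le_trans SM). Qed.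
Lemma lanti {X Y} (f g : hom X Y) : hle f g -> hle g f -> f = g. Proof. apply (le_antisym SM). Qed.
Lemma cmono {X Y Z} (f f' : hom X Y) (g g' : hom Y Z) : hle f f' -> hle g g' -> hle (f >> g) (f' >> g').
Proof. apply (cmp_mono SM). Qed.
Lemma cmonol {X Y Z} (f : hom X Y) (g g' : hom Y Z) : hle g g' -> hle (f >> g) (f >> g').
Proof. intros; apply cmono; auto using lrefl. Qed.
Lemma cmonor {X Y Z} (f f' : hom X Y) (g : hom Y Z) : hle f f' -> hle (f >> g) (f' >> g).
Proof. intros; apply cmono; auto using lrefl. Qed.
Lemma tmono {X X' Y Y'} (f f' : hom X X') (g g' : hom Y Y') : hle f f' -> hle g g' -> hle (f ** g) (f' ** g').
Proof. apply (tens_mono SM). Qed.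
Lemma idl {X Y} (f : hom X Y) : idm X >> f = f. Proof. apply (id_l SM). Qed.
Lemma idr {X Y} (f : hom X Y) : f >> idm Y = f. Proof. apply (id_r SM). Qed.
Lemma ca {X Y Z W} (f : hom X Y) (g : hom Y Z) (h : hom Z W) : (f >> g) >> h = f >> (g >> h).
Proof. apply (cmp_assoc SM). Qed.
Lemma tid X Y : idm X ** idm Y = idm (tens X Y). Proof. apply (tens_id SM). Qed.
Lemma tc {X X' X'' Y Y' Y''} (f : hom X X') (f' : hom X' X'') (g : hom Y Y') (g' : hom Y' Y'') :
  (f >> f') ** (g >> g') = (f ** g) >> (f' ** g').
Proof. apply (tens_cmp SM). Qed.

Lemma tsplit {X X' Y Y'} (f : hom X X') (g : hom Y Y') : f ** g = (f ** idm Y) >> (idm X' ** g).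
Proof. rewrite <- tc, idl, idr. reflexivity. Qed.
Lemma tsplit' X X' Y Y' (f : hom X X') (g : hom Y Y') : f ** g = (idm X ** g) >> (f ** idm Y').
Proof. rewrite <- tc, idl, idr. reflexivity. Qed.
Lemma tcs {X X' X'' Y Y' Y'' V} (f : hom X X') (f' : hom X' X'') (g : hom Y Y') (g' : hom Y' Y'')
  (r : hom (tens X'' Y'') V) :
  (f ** g) >> ((f' ** g') >> r) = ((f >> f') ** (g >> g')) >> r.
Proof. rewrite tc, ca. reflexivity. Qed.

Lemma a_iso1 X Y Z : assoc X Y Z >> assoc_inv X Y Z = idm _. Proof. apply (assoc_iso1 SM). Qed.
Lemma a_iso2 X Y Z : assoc_inv X Y Z >> assoc X Y Z = idm _. Proof. apply (assoc_iso2 SM). Qed.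
Lemma l_iso1 X : lunit X >> lunit_inv X = idm _. Proof. apply (lunit_iso1 SM). Qed.
Lemma l_iso2 X : lunit_inv X >> lunit X = idm _. Proof. apply (lunit_iso2 SM). Qed.
Lemma r_iso1 X : runit X >> runit_inv X = idm _. Proof. apply (runit_iso1 SM). Qed.
Lemma r_iso2 X : runit_inv X >> runit X = idm _. Proof. apply (runit_iso2 SM). Qed.
Lemma s_inv X Y : sym X Y >> sym Y X = idm _. Proof. apply (sym_inv SM). Qed.

Lemma a_nat {X X' Y Y' Z Z'} (f : hom X X') (g : hom Y Y') (h : hom Z Z') :
  ((f ** g) ** h) >> assoc X' Y' Z' = assoc X Y Z >> (f ** (g ** h)).
Proof. apply (assoc_nat SM). Qed.
Lemma ai_nat {X X' Y Y' Z Z'} (f : hom X X') (g : hom Y Y') (h : hom Z Z') :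
  (f ** (g ** h)) >> assoc_inv X' Y' Z' = assoc_inv X Y Z >> ((f ** g) ** h).
Proof.
  transitivity (assoc_inv X Y Z >> (assoc X Y Z >> ((f ** (g ** h)) >> assoc_inv X' Y' Z'))).
  { rewrite <- (ca (assoc_inv X Y Z)), a_iso2, idl. reflexivity. }
  rewrite <- (ca (assoc X Y Z)), <- a_nat, ca, a_iso1, idr. reflexivity.
Qed.
Lemma l_nat {X X'} (f : hom X X') : (idm unit ** f) >> lunit X' = lunit X >> f.
Proof. apply (lunit_nat SM). Qed.
Lemma r_nat {X X'} (f : hom X X') : (f ** idm unit) >> runit X' = runit X >> f.
Proof. apply (runit_nat SM). Qed.
Lemma li_nat {X X'} (f : hom X X') : f >> lunit_inv X' = lunit_inv X >> (idm unit ** f).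
Proof.
  transitivity (lunit_inv X >> (lunit X >> (f >> lunit_inv X'))).
  { rewrite <- (ca (lunit_inv X)), l_iso2, idl. reflexivity. }
  rewrite <- (ca (lunit X)), <- l_nat, ca, l_iso1, idr. reflexivity.
Qed.
Lemma ri_nat {X X'} (f : hom X X') : f >> runit_inv X' = runit_inv X >> (f ** idm unit).
Proof.
  transitivity (runit_inv X >> (runit X >> (f >> runit_inv X'))).
  { rewrite <- (ca (runit_inv X)), r_iso2, idl. reflexivity. }
  rewrite <- (ca (runit X)), <- r_nat, ca, r_iso1, idr. reflexivity.
Qed.
Lemma s_nat {X X' Y Y'} (f : hom X X') (g : hom Y Y') :
  (f ** g) >> sym X' Y' = sym X Y >> (g ** f).
Proof. apply (sym_nat SM). Qed.

Lemma tpull {X X' Y Y' Y'' V} (f : hom X X') (x : hom Y Y') (y : hom Y' Y'') (r : hom (tens X' Y'') V) :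
  (f ** (x >> y)) >> r = (idm X ** x) >> ((f ** y) >> r).
Proof. rewrite tcs, idl. reflexivity. Qed.
Lemma tpull' {X X' X'' Y Y' V} (x : hom X X') (y : hom X' X'') (f : hom Y Y') (r : hom (tens X'' Y') V) :
  ((x >> y) ** f) >> r = (x ** idm Y) >> ((y ** f) >> r).
Proof. rewrite tcs, idl. reflexivity. Qed.

Lemma tcl {X X' X'' Y Y'} (x : hom X X') (y : hom X' X'') (k : hom Y Y') :
  (x >> y) ** k = (x ** idm Y) >> (y ** k).
Proof. rewrite <- tc, idl. reflexivity. Qed.
Lemma tcr {X X' Y Y' Y''} (k : hom X X') (x : hom Y Y') (y : hom Y' Y'') :
  k ** (x >> y) = (idm X ** x) >> (k ** y).
Proof. rewrite <- tc, idl. reflexivity. Qed.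

Lemma mid_nat {X X' Y Y' Z Z' W W'} (f : hom X X') (g : hom Y Y') (h : hom Z Z') (k : hom W W') :
  ((f ** g) ** (h ** k)) >> mid X' Y' Z' W' = mid X Y Z W >> ((f ** h) ** (g ** k)).
Proof.
  unfold mid. rewrite !ca.
  rewrite <- (ca _ (assoc X' Y' (tens Z' W'))), a_nat, ca. f_equal.
  rewrite tcs, idr, ai_nat, tpull. f_equal.
  rewrite tcs, idr, <- tc, s_nat, idr, tcl, tpull. f_equal.
  rewrite tcs, idr, a_nat, tpull. f_equal.
  rewrite ai_nat. reflexivity.
Qed.

Lemma c_assoc X : copy X >> ((copy X ** idm X) >> assoc X X X) = copy X >> (idm X ** copy X).
Proof. rewrite <- ca. apply (copy_assoc CB). Qed.
Lemma c_unit_l X : copy X >> ((disc X ** idm X) >> lunit X) = idm X.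
Proof. rewrite <- ca. apply (copy_unit_l CB). Qed.
Lemma c_unit_r X : copy X >> ((idm X ** disc X) >> runit X) = idm X.
Proof. rewrite <- ca. apply (copy_unit_r CB). Qed.
Lemma c_unit_l_s {X Y} (h : hom X Y) : copy X >> ((disc X ** idm X) >> (lunit X >> h)) = h.
Proof. rewrite <- (ca _ (lunit X)), <- ca, c_unit_l, idl. reflexivity. Qed.
Lemma c_unit_r_s {X Y} (h : hom X Y) : copy X >> ((idm X ** disc X) >> (runit X >> h)) = h.
Proof. rewrite <- (ca _ (runit X)), <- ca, c_unit_r, idl. reflexivity. Qed.
Lemma cc_unit_l X : lunit_inv X >> ((codisc X ** idm X) >> cocopy X) = idm X.
Proof. rewrite <- ca. apply (cocopy_unit_l CB). Qed.
Lemma frob X : (copy X ** idm X) >> (assoc X X X >> (idm X ** cocopy X)) = cocopy X >> copy X.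
Proof. rewrite <- ca. apply (frobenius_l CB). Qed.
Lemma spec X : copy X >> cocopy X = idm X. Proof. apply (special CB). Qed.
Lemma c_tens X Y : copy (tens X Y) = (copy X ** copy Y) >> mid X X Y Y. Proof. apply (copy_tens CB). Qed.
Lemma d_tens X Y : disc (tens X Y) = (disc X ** disc Y) >> lunit unit. Proof. apply (disc_tens CB). Qed.
Lemma cc_tens X Y : cocopy (tens X Y) = mid X Y X Y >> (cocopy X ** cocopy Y). Proof. apply (cocopy_tens CB). Qed.
Lemma c_unitob : copy (@unit C) = lunit_inv unit. Proof. apply (copy_unit CB). Qed.
Lemma d_unitob : disc (@unit C) = idm unit. Proof. apply (disc_unitob CB). Qed.
Lemma c_lax {X Y} (c : hom X Y) : hle (c >> copy Y) (copy X >> (c ** c)). Proof. apply (copy_lax CB). Qed.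
Lemma d_lax {X Y} (c : hom X Y) : hle (c >> disc Y) (disc X). Proof. apply (disc_lax CB). Qed.
Lemma c_adj1 X : hle (idm X) (copy X >> cocopy X). Proof. apply (copy_adj1 CB). Qed.
Lemma c_adj2 X : hle (cocopy X >> copy X) (idm _). Proof. apply (copy_adj2 CB). Qed.
Lemma d_adj1 X : hle (idm X) (disc X >> codisc X). Proof. apply (disc_adj1 CB). Qed.
Lemma d_adj2 X : hle (codisc X >> disc X) (idm _). Proof. apply (disc_adj2 CB). Qed.

Lemma map_copy {X Y} (f : hom X Y) : is_map f -> copy X >> (f ** f) = f >> copy Y.
Proof. intros [H1 H2]. apply lanti; auto using c_lax. Qed.
Lemma map_disc {X Y} (f : hom X Y) : is_map f -> f >> disc Y = disc X.
Proof. intros [H1 H2]. apply lanti; auto using d_lax. Qed.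
Lemma map_copy_s {X Y V} (f : hom X Y) (r : hom (tens Y Y) V) : is_map f ->
  copy X >> ((f ** f) >> r) = f >> (copy Y >> r).
Proof. intros H. rewrite <- ca, map_copy, ca; auto. Qed.
Lemma map_disc_s {X Y V} (f : hom X Y) (r : hom unit V) : is_map f ->
  f >> (disc Y >> r) = disc X >> r.
Proof. intros H. rewrite <- ca, map_disc; auto. Qed.

Lemma le_pre {X Y} (u : hom X X) (h : hom X Y) : hle (idm X) u -> hle h (u >> h).
Proof. intros H. apply ltrans with (idm X >> h). rewrite idl; apply lrefl. apply cmonor; auto. Qed.
Lemma le_post {X Y} (u : hom Y Y) (h : hom X Y) : hle u (idm Y) -> hle (h >> u) h.
Proof. intros H. apply ltrans with (h >> idm Y). apply cmonol; auto. rewrite idr; apply lrefl. Qed.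

Lemma ladj_map {X Y} (f : hom X Y) (g : hom Y X) :
  hle (idm X) (f >> g) -> hle (g >> f) (idm Y) -> is_map f.
Proof.
  intros H1 H2. split.
  - apply ltrans with (f >> (g >> (copy X >> (f ** f)))).
    + rewrite <- ca. apply le_pre. exact H1.
    + apply cmonol. apply ltrans with (copy Y >> ((g ** g) >> (f ** f))).
      * rewrite <- !ca. apply cmonor. apply c_lax.
      * rewrite <- tc. apply le_post.
        rewrite <- tid. apply tmono; exact H2.
  - apply ltrans with (f >> (g >> disc X)).
    + rewrite <- ca. apply le_pre. exact H1.
    + apply cmonol. apply d_lax.
Qed.
Lemma iso_map {X Y} (f : hom X Y) (g : hom Y X) : f >> g = idm X -> g >> f = idm Y -> is_map f.
Proof. intros H1 H2. apply (@ladj_map X Y f g); [rewrite H1|rewrite H2]; apply lrefl. Qed.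

Lemma map_id X : is_map (idm X).
Proof. apply (@iso_map X X (idm X) (idm X)); apply idl. Qed.
Lemma map_cmp {X Y Z} (f : hom X Y) (g : hom Y Z) : is_map f -> is_map g -> is_map (f >> g).
Proof.
  intros Hf Hg. split.
  - rewrite tc, <- ca, map_copy, ca, map_copy, ca; auto. apply lrefl.
  - rewrite ca, map_disc, map_disc; auto. apply lrefl.
Qed.
Lemma map_tens {X X' Y Y'} (f : hom X X') (g : hom Y Y') : is_map f -> is_map g -> is_map (f ** g).
Proof.
  intros Hf Hg. split.
  - rewrite c_tens, ca, <- mid_nat, <- ca, <- tc, map_copy, map_copy, tc, ca, <- c_tens; auto. apply lrefl.
  - rewrite d_tens, d_tens, <- ca, <- tc, map_disc, map_disc; auto. apply lrefl.
Qed.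
Lemma copy_map X : is_map (copy X). Proof. exact (ladj_map _ _ (c_adj1 X) (c_adj2 X)). Qed.
Lemma disc_map X : is_map (disc X). Proof. exact (ladj_map _ _ (d_adj1 X) (d_adj2 X)). Qed.
Lemma lunit_map X : is_map (lunit X). Proof. exact (iso_map _ _ (l_iso1 X) (l_iso2 X)). Qed.
Lemma runit_map X : is_map (runit X). Proof. exact (iso_map _ _ (r_iso1 X) (r_iso2 X)). Qed.
Lemma sym_map X Y : is_map (sym X Y). Proof. exact (iso_map _ _ (s_inv X Y) (s_inv Y X)). Qed.

Lemma le_disc {X} (c : hom X unit) : hle c (disc X).
Proof. rewrite <- (idr c), <- d_unitob. apply d_lax. Qed.
Lemma map_toI {X} (f : hom X unit) : is_map f -> f = disc X.
Proof. intros [_ H]. apply lanti. apply le_disc. rewrite d_unitob, idr in H. exact H. Qed.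
Lemma lunitI_runitI : lunit (@unit C) = runit unit.
Proof. rewrite (map_toI (lunit_map unit)), (map_toI (runit_map unit)). reflexivity. Qed.
Lemma symII : sym (@unit C) unit = idm _.
Proof.
  assert (E : sym (@unit C) unit >> lunit unit = lunit unit).
  { rewrite (map_toI (map_cmp (sym_map unit unit) (lunit_map unit))), (map_toI (lunit_map unit)). reflexivity. }
  rewrite <- (idr (sym unit unit)), <- l_iso1, <- ca, E. reflexivity.
Qed.
Lemma midIIid X Y : mid X unit unit Y = idm _.
Proof.
  unfold mid. rewrite symII, !tid, idr, !ca, tcs, idl, a_iso2, tid, idl, a_iso1. reflexivity.
Qed.

Definition pi1 X Y : hom (tens X Y) X := (idm X ** disc Y) >> runit X.
Definition pi2 X Y : hom (tens X Y) Y := (disc X ** idm Y) >> lunit Y.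
Definition pr {Z X Y} (f : hom Z X) (g : hom Z Y) : hom Z (tens X Y) := copy Z >> (f ** g).

Lemma pi1_map X Y : is_map (pi1 X Y).
Proof. apply map_cmp. apply map_tens. apply map_id. apply disc_map. apply runit_map. Qed.
Lemma pi2_map X Y : is_map (pi2 X Y).
Proof. apply map_cmp. apply map_tens. apply disc_map. apply map_id. apply lunit_map. Qed.
Lemma pair_map {Z X Y} (f : hom Z X) (g : hom Z Y) : is_map f -> is_map g -> is_map (pr f g).
Proof. intros. apply map_cmp. apply copy_map. apply map_tens; auto. Qed.

Lemma pair_pi1 {Z X Y} (f : hom Z X) (g : hom Z Y) : is_map g -> pr f g >> pi1 X Y = f.
Proof.
  intros Hg. unfold pr, pi1. rewrite ca, tcs, idr, map_disc; auto.
  rewrite tsplit', ca, r_nat. apply c_unit_r_s.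
Qed.
Lemma pair_pi2 {Z X Y} (f : hom Z X) (g : hom Z Y) : is_map f -> pr f g >> pi2 X Y = g.
Proof.
  intros Hf. unfold pr, pi2. rewrite ca, tcs, idr, map_disc; auto.
  rewrite tsplit, ca, l_nat. apply c_unit_l_s.
Qed.
Lemma pre_pair {W Z X Y} (h : hom W Z) (f : hom Z X) (g : hom Z Y) : is_map h ->
  h >> pr f g = pr (h >> f) (h >> g).
Proof. intros Hh. unfold pr. rewrite tc, <- map_copy_s; auto. Qed.
Lemma copy_pi X Y : copy (tens X Y) >> (pi1 X Y ** pi2 X Y) = idm _.
Proof.
  unfold pi1, pi2. rewrite c_tens, tc, ca, <- (ca (mid X X Y Y)), <- mid_nat, midIIid, idr.
  rewrite tcs, <- tc, !ca, c_unit_r, c_unit_l. apply tid.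
Qed.
Lemma pair_eta {Z X Y} (h : hom Z (tens X Y)) : is_map h -> h = pr (h >> pi1 X Y) (h >> pi2 X Y).
Proof. intros Hh. rewrite <- pre_pair; auto. unfold pr. rewrite copy_pi, idr. reflexivity. Qed.
Lemma pair_pi X Y : pr (pi1 X Y) (pi2 X Y) = idm _.
Proof. rewrite (pair_eta (map_id (tens X Y))), !idl. reflexivity. Qed.
End PB.

Section M.
Context {C : PeirceanBicat}.
Implicit Types X Y Z W V : ob C.

Definition Mt {X} (c d : hom X (@unit C)) : hom X unit := copy X >> ((c ** d) >> lunit unit).
Definition dl Y : hom (tens Y Y) (@unit C) := cocopy Y >> disc Y.

Lemma Mt_le_r {X} (c d : hom X unit) : hle (Mt c d) d.
Proof.
  unfold Mt. apply ltrans with (copy X >> ((disc X ** d) >> lunit unit)).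
  - apply cmonol, cmonor, tmono. apply le_disc. apply lrefl.
  - rewrite tsplit, ca, l_nat, c_unit_l_s. apply lrefl.
Qed.
Lemma Mt_le_l {X} (c d : hom X unit) : hle (Mt c d) c.
Proof.
  unfold Mt. rewrite lunitI_runitI. apply ltrans with (copy X >> ((c ** disc X) >> runit unit)).
  - apply cmonol, cmonor, tmono. apply lrefl. apply le_disc.
  - rewrite tsplit', ca, r_nat, c_unit_r_s. apply lrefl.
Qed.
Lemma Mt_self {X} (c : hom X unit) : hle c (Mt c c).
Proof.
  unfold Mt. apply ltrans with ((c >> copy unit) >> lunit unit).
  - rewrite c_unitob, ca, l_iso2, idr. apply lrefl.
  - rewrite <- ca. apply cmonor. apply c_lax.
Qed.
Lemma Mt_mono {X} (c d c' d' : hom X unit) : hle c c' -> hle d d' -> hle (Mt c d) (Mt c' d').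
Proof. intros. unfold Mt. apply cmonol, cmonor, tmono; auto. Qed.
Lemma Mt_map {X Y} (f : hom X Y) (c d : hom Y unit) : is_map f -> f >> Mt c d = Mt (f >> c) (f >> d).
Proof. intros Hf. unfold Mt. rewrite <- map_copy_s, tcs; auto. Qed.
Lemma Mt_top {X} (d : hom X unit) : Mt (disc X) d = d.
Proof. unfold Mt. rewrite tsplit, ca, l_nat, c_unit_l_s. reflexivity. Qed.

Lemma frob_cap {V} (b : hom V unit) :
  (copy V ** idm V) >> (assoc V V V >> ((b ** dl V) >> lunit unit)) = cocopy V >> b.
Proof.
  unfold dl. rewrite tcr, ca, <- (ca (assoc V V V)), <- ca, frob, lunitI_runitI, tsplit', !ca, r_nat.
  rewrite c_unit_r_s. reflexivity.
Qed.

Lemma leib_eq {W V} (f g : hom W V) (b : hom V unit) : is_map f ->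
  Mt (f >> b) (pr f g >> dl V) = (pr f g >> cocopy V) >> b.
Proof.
  intros Hf. unfold Mt, pr.
  transitivity (copy W >> ((idm W ** copy W) >> ((f ** (f ** g)) >> ((b ** dl V) >> lunit unit)))).
  { rewrite tcs, tcs, idl, !ca. reflexivity. }
  rewrite <- (ca (copy W) (idm W ** copy W)), <- c_assoc, !ca.
  rewrite <- (ca (assoc W W W)), <- a_nat, ca, tcs, map_copy; auto.
  assert (E : (f >> copy V) ** (idm W >> g) = (f ** g) >> (copy V ** idm V)).
  { rewrite <- tc, idl, idr. reflexivity. }
  rewrite E, ca, frob_cap. reflexivity.
Qed.

Lemma le_top_rel {X Y} (f : hom X Y) : hle f (disc X >> codisc Y).
Proof.
  apply ltrans with (f >> (disc Y >> codisc Y)).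
  - apply ltrans with (f >> idm Y). rewrite idr; apply lrefl. apply cmonol, d_adj1.
  - rewrite <- ca. apply cmonor, d_lax.
Qed.

Lemma idI_tens {X Y} (g : hom X Y) : idm unit ** g = lunit X >> (g >> lunit_inv Y).
Proof. rewrite li_nat, <- ca, l_iso1, idl. reflexivity. Qed.

Lemma inter_le_r {W V} (f g : hom W V) : hle (copy W >> ((f ** g) >> cocopy V)) g.
Proof.
  apply ltrans with (copy W >> (((disc W >> codisc V) ** g) >> cocopy V)).
  - apply cmonol, cmonor, tmono. apply le_top_rel. apply lrefl.
  - rewrite tcl, (@tsplit' _ _ _ _ _ (codisc V) g), !ca, idI_tens, !ca, cc_unit_l, idr, c_unit_l_s.
    apply lrefl.
Qed.

Lemma inter_le_pair {W V} (f g : hom W V) : hle (pr f g >> cocopy V) g.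
Proof. unfold pr. rewrite ca. apply inter_le_r. Qed.

Lemma delta_pair {W Z Y} (h : hom W Z) (f g : hom W Y) : is_map h -> is_map f -> is_map g ->
  pr (pr h f) (pr h g) >> dl (tens Z Y) = pr f g >> dl Y.
Proof.
  intros Hh Hf Hg. unfold dl, pr. rewrite cc_tens, d_tens, tc, !ca.
  rewrite <- (ca ((h ** f) ** (h ** g))), mid_nat, ca, <- (ca (copy W ** copy W)), <- c_tens.
  rewrite <- (map_copy_s _ (copy_map W)), tcs, tcs, tcs. rewrite map_copy, (ca h (copy Z) (cocopy Z)), spec, idr, map_disc; auto.
  rewrite tsplit, ca, l_nat, c_unit_l_s, !ca. reflexivity. Qed.

Lemma HBo X : is_boolean (@hle C X unit) (bops X unit).
Proof. apply (proj1 (pb_peirce C)). Qed.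
Lemma peirce {X Y Z} (f : hom X Y) (c : hom Y Z) : is_map f -> f >> bneg (bops Y Z) c = bneg (bops X Z) (f >> c).
Proof. apply (proj2 (pb_peirce C)). Qed.

Lemma meet_eq {X} (c d : hom X unit) : bmeet (bops X unit) c d = Mt c d.
Proof.
  apply lanti.
  - apply ltrans with (Mt (bmeet (bops X unit) c d) (bmeet (bops X unit) c d)).
    apply Mt_self. apply Mt_mono. apply (b_meet_l (HBo X)). apply (b_meet_r (HBo X)).
  - apply (b_meet_glb (HBo X)). apply Mt_le_l. apply Mt_le_r.
Qed.
Lemma top_eq X : btop (bops X unit) = disc X.
Proof. apply lanti. apply le_disc. apply (b_top (HBo X)). Qed.
Lemma pact_meet {X Y} (f : hom X Y) (c d : hom Y unit) : is_map f ->
  f >> bmeet (bops Y unit) c d = bmeet (bops X unit) (f >> c) (f >> d).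
Proof. intros. rewrite !meet_eq. apply Mt_map; auto. Qed.
Lemma pact_top {X Y} (f : hom X Y) : is_map f -> f >> btop (bops Y unit) = btop (bops X unit).
Proof. intros. rewrite !top_eq. apply map_disc; auto. Qed.
Lemma pact_bot {X Y} (f : hom X Y) : is_map f -> f >> bbot (bops Y unit) = bbot (bops X unit).
Proof.
  intros. rewrite <- (b_neg_top (HBo Y)), peirce, pact_top, (b_neg_top (HBo X)); auto.
Qed.
Lemma pact_join {X Y} (f : hom X Y) (c d : hom Y unit) : is_map f ->
  f >> bjoin (bops Y unit) c d = bjoin (bops X unit) (f >> c) (f >> d).
Proof.
  intros. rewrite (b_join_demorgan (HBo Y)), (b_join_demorgan (HBo X)), peirce, pact_meet, !peirce; auto.
Qed.

Definition Ex {X Y} (a : hom (tens X Y) unit) : hom X unit := runit_inv X >> ((idm X ** codisc Y) >> a).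

Lemma Ex_adj {X Y} (a : hom (tens X Y) unit) (b : hom X unit) : hle (Ex a) b <-> hle a (pi1 X Y >> b).
Proof.
  unfold Ex, pi1. split; intro H.
  - apply ltrans with (((idm X ** disc Y) >> runit X) >> (runit_inv X >> ((idm X ** codisc Y) >> a))).
    + rewrite ca, <- (ca (runit X)), r_iso1, idl, <- ca, <- tc, idl.
      apply le_pre. rewrite <- tid. apply tmono. apply lrefl. apply d_adj1.
    + apply cmonol. exact H.
  - apply ltrans with (runit_inv X >> ((idm X ** codisc Y) >> ((idm X ** disc Y) >> runit X >> b))).
    + apply cmonol, cmonol. exact H.
    + rewrite ca, <- (ca (idm X ** codisc Y)), <- tc, idl.
      apply ltrans with (runit_inv X >> (idm _ >> (runit X >> b))).
      * apply cmonol, cmonor. rewrite <- tid. apply tmono. apply lrefl. apply d_adj2.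
      * rewrite idl, <- ca, r_iso2, idl. apply lrefl.
Qed.

Lemma Ex_mono {X Y} (a a' : hom (tens X Y) unit) : hle a a' -> hle (Ex a) (Ex a').
Proof. intros. unfold Ex. apply cmonol, cmonol; auto. Qed.
Lemma Ex_join {X Y} (a a' : hom (tens X Y) unit) :
  Ex (bjoin (bops _ unit) a a') = bjoin (bops X unit) (Ex a) (Ex a').
Proof.
  apply (b_eq_le (HBo X)). intro z.
  pose proof (Ex_adj (bjoin (bops _ unit) a a') z) as E1.
  pose proof (Ex_adj a z) as E2. pose proof (Ex_adj a' z) as E3.
  pose proof (b_join (HBo _) a a' (pi1 X Y >> z)) as E4.
  pose proof (b_join (HBo X) (Ex a) (Ex a') z) as E5.
  tauto.
Qed.
Lemma Ex_frob {X Y} (a : hom (tens X Y) unit) (b : hom X unit) :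
  Ex (bmeet (bops _ unit) a (pi1 X Y >> b)) = bmeet (bops X unit) (Ex a) b.
Proof.
  set (HX := HBo X). set (HXY := HBo (tens X Y)).
  apply lanti.
  - apply (b_meet_glb HX). apply Ex_mono, (b_meet_l HXY).
    apply Ex_adj, (b_meet_r HXY).
  - set (m1 := bmeet (bops _ unit) a (pi1 X Y >> b)).
    assert (H1 : hle (Ex a) (bjoin (bops X unit) (Ex m1) (bneg (bops X unit) b))).
    { rewrite (b_split HXY a (pi1 X Y >> b)), Ex_join. apply (b_join_mono HX). apply lrefl.
      apply Ex_adj. rewrite peirce by apply pi1_map. apply (b_meet_r HXY). }
    apply ltrans with (bmeet (bops X unit) (bjoin (bops X unit) (Ex m1) (bneg (bops X unit) b)) b).
    + apply (b_meet_mono HX); auto. apply lrefl.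
    + rewrite (b_meetC HX), (b_distr HX), (b_compl1 HX), (b_join_bot HX). apply (b_meet_r HX).
Qed.

Lemma tens_pi1 {X X' Y} (f : hom X' X) : (f ** idm Y) >> pi1 X Y = pi1 X' Y >> f.
Proof. unfold pi1. rewrite ca, <- r_nat, tcs, <- ca, <- tc, !idl, !idr. reflexivity. Qed.
Lemma tens_pi2 {X X' Y} (f : hom X' X) : is_map f -> (f ** idm Y) >> pi2 X Y = pi2 X' Y.
Proof. intros. unfold pi2. rewrite tcs, map_disc, idl; auto. Qed.
Lemma tens_pair {X X' Y} (f : hom X' X) : is_map f -> f ** idm Y = pr (pi1 X' Y >> f) (pi2 X' Y).
Proof.
  intros Hf. rewrite (pair_eta (map_tens Hf (map_id Y))), tens_pi1, tens_pi2; auto.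
Qed.
Lemma Ex_BC {X X' Y} (f : hom X' X) (a : hom (tens X Y) unit) : is_map f ->
  f >> Ex a = Ex (pr (pi1 X' Y >> f) (pi2 X' Y) >> a).
Proof.
  intros Hf. unfold Ex. rewrite <- tens_pair; auto.
  rewrite <- ca, ri_nat, ca, tcs, tcs, !idl, !idr. reflexivity.
Qed.

Lemma elem {X Y} (a : hom (tens X Y) unit) (b : hom (tens (tens X Y) Y) unit) :
  hle (bmeet (bops _ unit) (pi1 (tens X Y) Y >> a)
        (pr (pi1 (tens X Y) Y >> pi2 X Y) (pi2 (tens X Y) Y) >> dl Y)) b
  <-> hle a (pr (idm (tens X Y)) (pi2 X Y) >> b).
Proof.
  set (Z := tens X Y). set (p := pi1 Z Y). set (s := pi2 X Y).
  assert (Hp : is_map p) by apply pi1_map.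
  assert (Hs : is_map s) by apply pi2_map.
  assert (Hq : is_map (pi2 Z Y)) by apply pi2_map.
  assert (Hd : is_map (pr (idm Z) s)) by (apply pair_map; auto using map_id).
  assert (Hdp : pr (idm Z) s >> p = idm Z) by (apply pair_pi1; auto).
  split; intro H.
  - apply ltrans with (pr (idm Z) s >> bmeet (bops _ unit) (p >> a) (pr (p >> s) (pi2 Z Y) >> dl Y)).
    + rewrite pact_meet, <- !ca, Hdp, idl, pre_pair, <- ca, Hdp, idl, pair_pi2; auto using map_id.
      unfold pr, dl. rewrite ca, map_copy_s, <- (ca (copy Y)), spec, idl, map_disc; auto.
      rewrite <- (top_eq Z), (b_meet_top (HBo Z)). apply lrefl.
    + apply cmonol. exact H.
  - apply ltrans with (bmeet (bops _ unit) (p >> (pr (idm Z) s >> b)) (pr (p >> s) (pi2 Z Y) >> dl Y)).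
    + apply (b_meet_mono (HBo _)). apply cmonol; auto. apply lrefl.
    + rewrite <- ca, pre_pair, idr; auto.
      rewrite <- (delta_pair Hp (map_cmp Hp Hs) Hq), meet_eq, leib_eq.
      2: { apply pair_map; auto using map_cmp. }
      apply ltrans with (pr p (pi2 Z Y) >> b).
      * apply cmonor. apply inter_le_pair.
      * unfold p. rewrite pair_pi, idl. apply lrefl.
Qed.
End M.
Unset Implicit Arguments.

Theorem proposition27 (C : PeirceanBicat) :
  is_boolean_hyperdoctrine (HomIDoc C).
Proof.
  unfold is_boolean_hyperdoctrine. split; [|split; [|split; [|split]]].
  - unfold is_fp_cat; cbn.
    split; [intro X; apply map_id|].
    split; [intros; apply map_cmp; auto|].
    split; [intros; split; [apply idl|apply idr]|].
    split; [intros; apply ca|].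
    split; [intros; split; [apply pi1_map|apply pi2_map]|].
    split; [intros Z X Y f g Hf Hg; split; [apply (pair_map Hf Hg)|split; [apply pair_pi1; auto|apply pair_pi2; auto]]|].
    split; [intros; apply pair_eta; auto|].
    split; [intros; apply disc_map|].
    intros; apply map_toI; auto.
  - unfold is_infsl_functor; cbn.
    split; [intro X; pose proof (HBo X) as HB; split; [apply (b_refl HB)|split; [apply (b_trans HB)|split; [apply (b_anti HB)|split; [apply (b_top HB)|apply (b_meet HB)]]]]|].
    split; [intros X Y f Hf; split; [apply pact_top; auto|intros; apply pact_meet; auto]|].
    split; [intros; apply idl|].
    intros; apply ca.
  - unfold is_elementary; cbn. intro Y. exists (dl Y). intros X a b. apply elem.
  - unfold is_existential; cbn. exists (fun X Y a => Ex a). intros X Y.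
    split; [intros; apply Ex_adj|].
    split; [intros; apply Ex_frob|].
    intros; apply Ex_BC; auto.
  - unfold is_boolean_doctrine; cbn. split; [intro X; apply HBo|].
    intros X Y f Hf.
    split; [apply pact_top; auto|].
    split; [apply pact_bot; auto|].
    split; [intros; apply pact_meet; auto|].
    split; [intros; apply pact_join; auto|].
    intros; apply peirce; auto.
Qed.
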